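(* Let $\mathcal{A}$ be a finite abelian group with $|\mathcal{A}|\ge 3$. Let $H_1(p_1,p_2)$ denote a graph consisting of a triangle $v_2v_3v_4$, a vertex $v_1$ adjacent to $v_2$, $p_1$ pendant vertices adjacent to $v_1$, $p_2\ge0$ pendant vertices adjacent to $v_2$, and $t\ge 1$ further neighbours of $v_1$, each of which is a support vertex all of whose neighbours other than $v_1$ are pendant vertices. Suppose $p_1\ge 1$. Then $H_1(p_1,p_2)$ is $\mathcal{A}$-vertex magic if and only if $p_2=0$ and: (i) if $p_1=1$, every support neighbour of $v_1$ is a strong support vertex and there exist an involution $h$ of $\mathcal{A}$ and $g\in\mathcal{A}\setminus\{0,h\}$ with $h\neq (d(v_1)-2)g$; (ii) if $p_1\ge 2$, every support neighbour of $v_1$ is a strong support vertex and $|\mathcal{A}|$ is even.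
   Context: A pendant vertex has degree $1$; a support vertex is a vertex adjacent to a pendant vertex, and a strong support vertex is one adjacent to at least two pendant vertices. $d(v)$ is the degree of $v$; an involution is an element of order $2$. A map $\ell:V(G)\to\mathcal{A}\setminus\{0\}$ is an $\mathcal{A}$-vertex magic labeling if there is $\mu\in\mathcal{A}$ with $\sum_{u\in N(v)}\ell(u)=\mu$ for every vertex $v$; $G$ is $\mathcal{A}$-vertex magic if such a labeling exists. *)

(* Defs.v *)
From HB Require Import structures.
From mathcomp Require Import all_boot all_order all_algebra.
Set Implicit Arguments. Unset Strict Implicit. Unset Printing Implicit Defensive.
Import GRing.Theory.
Local Open Scope ring_scope.

Section GraphNotions.
Variables (T : finType) (adj : rel T).

Definition deg (v : T) : nat := #|[pred u | adj v u]|.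
Definition pendant (v : T) : bool := deg v == 1%N.
Definition support_vertex (v : T) : bool := [exists u, adj v u && pendant u].
Definition strong_support (v : T) : bool :=
  (2 <= #|[pred u | adj v u && pendant u]|)%N.

Definition vertex_magic_labeling (A : zmodType) (l : T -> A) : Prop :=
  (forall v, l v != 0) /\
  exists mu : A, forall v, \sum_(u | adj v u) l u = mu.

Definition is_vertex_magic (A : zmodType) : Prop :=
  exists l : T -> A, vertex_magic_labeling l.
End GraphNotions.

Definition involution (A : zmodType) (h : A) : bool := (h != 0) && (h + h == 0).

(* ---------- The graph H_1(p1,p2) ----------
   core vertices 'I_4 : 0 = v1, 1 = v2, 2 = v3, 3 = v4;
   'I_p1 : pendants of v1;  'I_p2 : pendants of v2;
   'I_t  : the further neighbours u_i of v1;
   {i : 'I_t & 'I_(q i)} : the q i pendants attached to u_i. *)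
Definition H1V (p1 p2 t : nat) (q : 'I_t -> nat) : finType :=
  ('I_4 + 'I_p1 + 'I_p2 + 'I_t + {i : 'I_t & 'I_(q i)})%type.

Definition core_edge (a b : 'I_4) : bool :=
  ((a == 0 :> nat) && (b == 1 :> nat)) || ((a == 1 :> nat) && (b == 2 :> nat))
  || ((a == 1 :> nat) && (b == 3 :> nat)) || ((a == 2 :> nat) && (b == 3 :> nat)).

Definition H1e0 (p1 p2 t : nat) (q : 'I_t -> nat) (x y : H1V p1 p2 q) : bool :=
  match x, y with
  | inl (inl (inl (inl a))), inl (inl (inl (inl b))) => core_edge a b
  | inl (inl (inl (inr _))), inl (inl (inl (inl b))) => b == 0 :> nat
  | inl (inl (inr _)), inl (inl (inl (inl b))) => b == 1 :> nat
  | inl (inr _), inl (inl (inl (inl b))) => b == 0 :> nat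
  | inr (existT i _), inl (inr j) => j == i
  | _, _ => false
  end.

Definition H1adj (p1 p2 t : nat) (q : 'I_t -> nat) : rel (H1V p1 p2 q) :=
  fun x y => H1e0 x y || H1e0 y x.

Definition H1v1 (p1 p2 t : nat) (q : 'I_t -> nat) : H1V p1 p2 q :=
  inl (inl (inl (inl (@Ordinal 4 0 isT)))).

(* Main.v *)
Require Import Defs.
From HB Require Import structures.
From mathcomp Require Import all_boot all_order all_algebra.
From mathcomp Require Import zify ring.
From Stdlib Require Import ClassicalEpsilon.
Set Implicit Arguments. Unset Strict Implicit. Unset Printing Implicit Defensive.
Import GRing.Theory.
Local Open Scope ring_scope.

Section H.
Variables (p1 p2 t : nat) (q : 'I_t -> nat).
Local Notation V := (H1V p1 p2 q).
Local Notation adj := (@H1adj p1 p2 t q).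
Definition cv (a : 'I_4) : V := inl (inl (inl (inl a))).
Definition pv1 (j : 'I_p1) : V := inl (inl (inl (inr j))).
Definition pv2 (j : 'I_p2) : V := inl (inl (inr j)).
Definition uv (i : 'I_t) : V := inl (inr i).
Definition wv (i : 'I_t) (j : 'I_(q i)) : V := inr (existT _ i j).
Arguments wv : clear implicits.
Definition c0 : 'I_4 := @Ordinal 4 0 isT.
Definition c1 : 'I_4 := @Ordinal 4 1 isT.
Definition c2 : 'I_4 := @Ordinal 4 2 isT.
Definition c3 : 'I_4 := @Ordinal 4 3 isT.

Section Big.
Variables (R : Type) (idx : R) (op : Monoid.com_law idx).
Local Notation "\BIG_ ( i : T ) F" := (\big[op/idx]_(i : T) F) (at level 36, i, T at level 50, F at level 36).

Lemma sum4 (G : 'I_4 -> R) :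
  \big[op/idx]_(a : 'I_4) G a = op (G c0) (op (G c1) (op (G c2) (G c3))).
Proof.
rewrite !big_ord_recl big_ord0 Monoid.mulm1.
by congr (op (G _) (op (G _) (op (G _) (G _)))); apply: val_inj.
Qed.

Lemma bigH (F : V -> R) :
  \big[op/idx]_(x : V) F x =
  op (op (op (op (\big[op/idx]_(a : 'I_4) F (cv a)) (\big[op/idx]_(j : 'I_p1) F (pv1 j)))
     (\big[op/idx]_(j : 'I_p2) F (pv2 j))) (\big[op/idx]_(i : 'I_t) F (uv i)))
     (\big[op/idx]_(i : 'I_t) \big[op/idx]_(j : 'I_(q i)) F (wv i j)).
Proof.
rewrite !big_sumType; congr (op _ _).
rewrite (sig_big_dep xpredT (fun i => xpredT) (fun i j => F (wv i j))).
by apply: eq_bigr => -[i j].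
Qed.

Lemma big2_idx : \big[op/idx]_(i : 'I_t) \big[op/idx]_(j : 'I_(q i)) idx = idx.
Proof. by rewrite big1 // => k _; rewrite big1_eq. Qed.

Definition N (v : V) (F : V -> R) := \big[op/idx]_(u | adj v u) F u.

Lemma NE v F : N v F = \big[op/idx]_(u : V) (if adj v u then F u else idx).
Proof. by rewrite /N big_mkcond. Qed.

Lemma N_wv i j F : N (wv i j) F = F (uv i).
Proof.
rewrite NE bigH sum4 /H1adj /=.
rewrite !big1_eq big2_idx !Monoid.simpm -big_mkcond (big_pred1 i) // => k /=.
by rewrite orbF.
Qed.

Lemma N_uv i F : N (uv i) F = op (F (cv c0)) (\big[op/idx]_(j : 'I_(q i)) F (wv i j)).
Proof.
rewrite NE bigH sum4 /H1adj /=.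
rewrite !big1_eq !Monoid.mulm1; congr (op _ _).
rewrite (bigD1 i) //= eqxx [X in op _ X]big1 ?Monoid.mulm1 // => k Hk.
by rewrite eq_sym (negbTE Hk) big1_eq.
Qed.

Lemma N_pv1 j F : N (pv1 j) F = F (cv c0).
Proof.
rewrite NE bigH sum4 /H1adj /= !big1_eq big2_idx ?Monoid.mulm1 ?Monoid.mul1m //.
Qed.

Lemma N_pv2 j F : N (pv2 j) F = F (cv c1).
Proof.
rewrite NE bigH sum4 /H1adj /= !big1_eq big2_idx ?Monoid.mulm1 ?Monoid.mul1m //.
Qed.

Lemma N_v3 F : N (cv c2) F = op (F (cv c1)) (F (cv c3)).
Proof.
rewrite NE bigH sum4 /H1adj /= !big1_eq big2_idx ?Monoid.mulm1 ?Monoid.mul1m //.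
Qed.

Lemma N_v4 F : N (cv c3) F = op (F (cv c1)) (F (cv c2)).
Proof.
rewrite NE bigH sum4 /H1adj /= !big1_eq big2_idx ?Monoid.mulm1 ?Monoid.mul1m //.
Qed.

Lemma N_v2 F : N (cv c1) F =
  op (F (cv c0)) (op (F (cv c2)) (op (F (cv c3)) (\big[op/idx]_(j : 'I_p2) F (pv2 j)))).
Proof.
rewrite NE bigH sum4 /H1adj /= !big1_eq big2_idx ?Monoid.mulm1 ?Monoid.mul1m.
by rewrite !Monoid.mulmA.
Qed.

Lemma N_v1 F : N (cv c0) F =
  op (F (cv c1)) (op (\big[op/idx]_(j : 'I_p1) F (pv1 j)) (\big[op/idx]_(i : 'I_t) F (uv i))).
Proof.
rewrite NE bigH sum4 /H1adj /= !big1_eq big2_idx ?Monoid.mulm1 ?Monoid.mul1m.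
by rewrite !Monoid.mulmA.
Qed.


End Big.

Lemma sum1_ordn n : (\sum_(i < n) 1)%N = n.
Proof. by elim: n => [|n IH]; rewrite ?big_ord0 // big_ord_recr /= IH addn1. Qed.

Lemma degE v : deg adj v = N addn v (fun _ => 1%N).
Proof. by rewrite /deg -sum1_card /N; apply: eq_bigl => u; rewrite inE. Qed.

Lemma deg_v1 : deg adj (cv c0) = (1 + (p1 + t))%N.
Proof. by rewrite degE N_v1 !sum1_ordn. Qed.
Lemma deg_v3 : deg adj (cv c2) = 2%N.
Proof. by rewrite degE N_v3. Qed.
Lemma deg_v4 : deg adj (cv c3) = 2%N.
Proof. by rewrite degE N_v4. Qed.
Lemma deg_wv i j : deg adj (wv i j) = 1%N.
Proof. by rewrite degE N_wv. Qed.
Lemma deg_pv1 j : deg adj (pv1 j) = 1%N.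
Proof. by rewrite degE N_pv1. Qed.

Definition cnt v := N addn v (fun u => nat_of_bool (pendant adj u)).

Lemma support_cnt v : support_vertex adj v -> (0 < cnt v)%N.
Proof.
move/existsP=> [u /andP [Ha Hp]]; by rewrite /cnt /N (bigD1 u) //= Hp.
Qed.

Lemma strong_cnt v : strong_support adj v = (2 <= cnt v)%N.
Proof.
rewrite /strong_support -sum1_card /cnt /N big_mkcondr /=.
by congr (_ < _)%N; apply: eq_bigr => u _; case: (pendant adj u).
Qed.

Lemma cnt_uv i : (1 <= t)%N -> cnt (uv i) = q i.
Proof.
move=> ht; rewrite /cnt N_uv /pendant deg_v1.
have -> : (1 + (p1 + t) == 1)%N = false by apply/negbTE/eqP; lia.
rewrite -[RHS]sum1_ordn /=; apply: eq_bigr => j _.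
by rewrite deg_wv.
Qed.

Lemma big_empty (R : Type) (idx : R) (op : Monoid.com_law idx) n (F : 'I_n -> R) :
  n = 0%N -> \big[op/idx]_(j < n) F j = idx.
Proof. by move=> e; rewrite big1 // => j; have := ltn_ord j; rewrite {2}e. Qed.

Lemma big_one (R : Type) (idx : R) (op : Monoid.com_law idx) n (F : 'I_n -> R) (j0 : 'I_n) :
  (n <= 1)%N -> \big[op/idx]_(j < n) F j = F j0.
Proof.
move=> hn; rewrite (bigD1 j0) //= big1 ?Monoid.mulm1 // => j hj.
by move: hj; have := ltn_ord j; have := ltn_ord j0; case: j j0 => [[|?] ?] [[|?] ?] //; lia.
Qed.

Lemma ss_ok : p2 = 0%N -> (1 <= t)%N -> (forall i, 2 <= q i)%N ->
  forall u, adj (cv c0) u -> support_vertex adj u -> strong_support adj u.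
Proof.
move=> Hp2 ht Hq u; case: u => [[[[a|j]|j]|i]|[i j]].
- case: a => [[|[|[|[|a]]]] Ha] //.
  have -> : Ordinal Ha = c1 by apply: val_inj.
  move=> _ /support_cnt; rewrite /cnt N_v2 big_empty // /pendant deg_v1 deg_v3 deg_v4.
  have -> : (1 + (p1 + t) == 1)%N = false by apply/negbTE/eqP; lia.
  by [].
- move=> _ /support_cnt; rewrite /cnt N_pv1 /pendant deg_v1.
  have -> : (1 + (p1 + t) == 1)%N = false by apply/negbTE/eqP; lia.
  by [].
- by [].
- by move=> _ _; rewrite strong_cnt cnt_uv.
- by [].
Qed.

Lemma q2_of_ss : (1 <= t)%N -> (forall i, 1 <= q i)%N ->
  (forall u, adj (cv c0) u -> support_vertex adj u -> strong_support adj u) ->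
  forall i, (2 <= q i)%N.
Proof.
move=> ht hq Hss i.
have := Hss (uv i) isT.
rewrite strong_cnt cnt_uv //; apply.
apply/existsP; exists (wv i (Ordinal (hq i))).
by rewrite /pendant deg_wv /H1adj /= eqxx.
Qed.
End H.

Lemma sum_const_ord (A : zmodType) n (x : A) : \sum_(i < n) x = x *+ n.
Proof. by elim: n => [|n IH]; rewrite ?big_ord0 // big_ord_recr IH mulrSr. Qed.

Lemma addr_eq_l (A : zmodType) (a b : A) : a + b = a -> b = 0.
Proof. by move=> e; apply: (@addrI _ a); rewrite addr0. Qed.


Lemma inv_even (T : finType) (f : T -> T) :
  (forall x, f (f x) = x) ->
  forall S : {set T}, (forall x, x \in S -> f x != x) -> (forall x, x \in S -> f x \in S) -> ~~ odd #|S|.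
Proof.
move=> ff S; move: {2}#|S| (leqnn #|S|) => n; elim: n S => [|n IH] S hS nf stS.
  by move: hS; rewrite leqn0 => /eqP ->.
case: (set_0Vmem S) => [-> | [x xS]]; first by rewrite cards0.
have fxS := stS x xS.
pose S' := S :\ x :\ f x.
have hc : #|S| = (#|S'|.+2)%N.
  rewrite (cardsD1 x S) xS (cardsD1 (f x) (S :\ x)) !inE fxS (nf x xS) /=.
  by rewrite add1n.
have stS' : forall y, y \in S' -> f y \in S'.
  move=> y; rewrite !inE => /and3P [ynfx ynx yS].
  rewrite stS // andbT; apply/andP; split.
    by apply: contra ynx => /eqP e; rewrite -[y]ff e ff.
  by apply: contra ynfx => /eqP e; rewrite -[y]ff e.
rewrite hc /= negbK.
have : ~~ odd #|S'|.
  apply: IH; [by move: hS; rewrite hc; lia | | exact: stS'].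
  by move=> y; rewrite !inE => /and3P [_ _ /nf].
by [].
Qed.

Section A.
Variable A : finZmodType.

Lemma inv_even_card (h : A) : involution h -> ~~ odd #|A|.
Proof.
case/andP=> hn0 /eqP hh.
rewrite -cardsT; apply: (@inv_even _ (fun x => x + h)) => //.
- by move=> x; rewrite -addrA hh addr0.
- by move=> x _; rewrite -subr_eq0 addrC addKr.
Qed.

Lemma even_inv : ~~ odd #|A| -> exists h : A, involution h.
Proof.
move=> ev; apply/existsP; apply: contraNT ev; rewrite negb_exists => /forallP H.
have : ~~ odd #|[set x : A | x != 0]|.
  apply: (@inv_even _ (fun x => - x)); first by move=> x; rewrite opprK.
    move=> x; rewrite inE => x0; apply/eqP => e; move: (H x); rewrite /involution.
    by rewrite x0 -{1}e addNr eqxx.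
  by move=> x; rewrite !inE oppr_eq0.
move=> hev; rewrite -cardsT (cardsD1 0 [set: A]) inE /=.
have -> : [set: A] :\ 0 = [set x : A | x != 0].
  by apply/setP => x; rewrite !inE andbT.
by rewrite hev.
Qed.

Lemma pick2 (h3 : (3 <= #|A|)%N) (y : A) : exists a : A, (a != 0) && (a != y).
Proof.
apply/existsP; apply: contraLR h3; rewrite negb_exists => /forallP H.
have : (#|A| <= #|[set (0%R : A); y]|)%N.
  rewrite -cardsT; apply: subset_leq_card; apply/subsetP => a _.
  by rewrite !inE; move: (H a); case: eqP; case: eqP.
rewrite cards2; case: (_ != _); lia.
Qed.

Lemma ex_nzsum (h3 : (3 <= #|A|)%N) k (x : A) :
  exists f : 'I_k.+2 -> A, (forall j, f j != 0) /\ \sum_j f j = x.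
Proof.
elim: k x => [|k IH] x.
  have [a /andP [a0 ax]] := pick2 h3 x.
  exists (fun j => if unlift ord0 j is Some _ then x - a else a); split.
    by move=> j; case: unliftP => [j' _|_] //; rewrite subr_eq0 eq_sym.
  by rewrite big_ord_recl unlift_none big_ord1 liftK addrC subrK.
have [e e0] : exists e : A, e != 0 by have [a /andP [a0 _]] := pick2 h3 0; exists a.
have [f [fnz fs]] := IH (x - e).
exists (fun j => if unlift ord0 j is Some j' then f j' else e); split.
  by move=> j; case: unliftP => [j' _|_].
rewrite big_ord_recl unlift_none.
under eq_bigr do rewrite liftK.
by rewrite fs addrC subrK.
Qed.
End A.
Lemma ex_nzsum_gen (A : finZmodType) (h3 : (3 <= #|A|)%N) k (x : A) :
  (1 <= k)%N -> (k = 1%N -> x != 0) ->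
  exists f : 'I_k -> A, (forall j, f j != 0) /\ \sum_j f j = x.
Proof.
case: k => [|[|k]] // _.
  move=> /(_ erefl) hx; exists (fun _ => x); split => //; by rewrite big_ord1.
by move=> _; exact: ex_nzsum.
Qed.

Unset Implicit Arguments.
Theorem proposition3p5 (A : finZmodType) (p1 p2 t : nat) (q : 'I_t -> nat) :
  (3 <= #|A|)%N -> (1 <= p1)%N -> (1 <= t)%N -> (forall i, 1 <= q i)%N ->
  is_vertex_magic (@H1adj p1 p2 t q) A <->
  (p2 = 0%N /\
   (p1 = 1%N ->
      (forall u, H1adj (H1v1 p1 p2 q) u -> support_vertex (@H1adj p1 p2 t q) u ->
                 strong_support (@H1adj p1 p2 t q) u) /\
      exists h g : A, involution h /\ g != 0 /\ g != h /\
                      h != g *+ (deg (@H1adj p1 p2 t q) (H1v1 p1 p2 q) - 2)) /\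
   ((2 <= p1)%N ->
      (forall u, H1adj (H1v1 p1 p2 q) u -> support_vertex (@H1adj p1 p2 t q) u ->
                 strong_support (@H1adj p1 p2 t q) u) /\
      ~~ odd #|A|)).
Proof.
move=> h3 hp1 ht hq.
have Hv1 : H1v1 p1 p2 q = cv p1 p2 q c0 by [].
rewrite Hv1 deg_v1.
split.
- case=> l [Hnz [mu Hmu]].
  have HN : forall v, N +%R v l = mu := Hmu.
  have E0 : l (cv p1 p2 q c0) = mu.
    by have := HN (pv1 p2 q (Ordinal hp1)); rewrite N_pv1.
  have Eu : forall i, l (uv p1 p2 q i) = mu.
    by move=> i; have := HN (wv p1 p2 (Ordinal (hq i))); rewrite N_wv.
  have E3 := HN (cv p1 p2 q c2); rewrite N_v3 in E3.
  have E4 := HN (cv p1 p2 q c3); rewrite N_v4 in E4.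
  have Hp2 : p2 = 0%N.
    apply/eqP; rewrite -leqn0; apply: contraT; rewrite -ltnNge => hp2.
    have := HN (pv2 p1 q (Ordinal hp2)); rewrite N_pv2 => e.
    rewrite e in E3; move: (Hnz (cv p1 p2 q c3)); by rewrite (addr_eq_l E3) eqxx.
  have E2 := HN (cv p1 p2 q c1); rewrite N_v2 big_empty // /= addr0 E0 in E2.
  have E23 := addr_eq_l E2.
  have e23 : l (cv p1 p2 q c2) = l (cv p1 p2 q c3).
    by apply: (@addrI _ (l (cv p1 p2 q c1))); rewrite E3 E4.
  have inv : involution (l (cv p1 p2 q c2)).
    by rewrite /involution Hnz /= {2}e23 E23.
  have Hq2 : forall i, (2 <= q i)%N.
    move=> i; apply: contraT; rewrite -ltnNge ltnS => hqi.
    have := HN (uv p1 p2 q i); rewrite N_uv E0 => /addr_eq_l.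
    rewrite (big_one _ _ (Ordinal (hq i))) // => e.
    by move: (Hnz (wv p1 p2 (Ordinal (hq i)))); rewrite e eqxx.
  have Hss := ss_ok Hp2 ht Hq2.
  have E1 := HN (cv p1 p2 q c0); rewrite N_v1 in E1.
  have Su : \sum_(i < t) l (uv p1 p2 q i) = mu *+ t.
    by rewrite (eq_bigr (fun _ => mu)) ?sum_const_ord // => i _; rewrite Eu.
  rewrite /= Su in E1.
  split; first exact: Hp2.
  split.
  + move=> h1; split; first exact: Hss.
    exists (l (cv p1 p2 q c2)), mu.
    split; first exact: inv.
    split; first by rewrite -E0 Hnz.
    split.
      apply/eqP => e; move: (Hnz (cv p1 p2 q c1)).
      by rewrite -(addrK (l (cv p1 p2 q c2)) (l (cv p1 p2 q c1))) E4 e subrr eqxx.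
    have -> : (1 + (p1 + t) - 2 = t)%N by lia.
    have hp1' : (p1 <= 1)%N by lia.
    rewrite (big_one _ _ (Ordinal hp1)) // in E1.
    apply/eqP => e; move: (Hnz (pv1 p2 q (Ordinal hp1))).
    set x := l (pv1 p2 q (Ordinal hp1)) in E1 *.
    have ex : x = (l (cv p1 p2 q c1) + (x + mu *+ t)) - (l (cv p1 p2 q c1) + l (cv p1 p2 q c2)).
      by rewrite e addrCA addrK.
    by rewrite ex E1 E4 subrr eqxx.
  + move=> h2; split; first exact: Hss.
    exact: inv_even_card inv.
- case=> Hp2 [H1 H2].
  have [c [mu [ic m0 mc Hq2 hct]]] : exists c mu : A, [/\ involution c, mu != 0, mu != c,
      (forall i, 2 <= q i)%N & (p1 = 1%N -> c != mu *+ t)].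
    have [e1|ne1] := eqVneq p1 1%N.
      case: (H1 e1) => Hss [h [g [ih [g0 [gh ght]]]]].
      exists h, g; split => //; first exact: q2_of_ss ht hq Hss.
      by move=> _; have <- : (1 + (p1 + t) - 2 = t)%N by lia.
    have hp12 : (2 <= p1)%N by lia.
    case: (H2 hp12) => Hss ev.
    have [c ic] := even_inv ev.
    have [mu /andP [m0 mc]] := pick2 h3 c.
    exists c, mu; split => //; first exact: q2_of_ss ht hq Hss.
    by move=> e; rewrite e eqxx in ne1.
  have [f1 [f1nz f1s]] : exists f : 'I_p1 -> A, (forall j, f j != 0) /\ \sum_j f j = c - mu *+ t.
    by apply: ex_nzsum_gen => // e; rewrite subr_eq0; exact: hct.
  have Hg : forall i, exists g : 'I_(q i) -> A, (forall j, g j != 0) /\ \sum_j g j = 0.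
    move=> i; apply: ex_nzsum_gen => // e; move: (Hq2 i); by rewrite e.
  pose g i := proj1_sig (constructive_indefinite_description _ (Hg i)).
  have gP : forall i, (forall j, g i j != 0) /\ \sum_j g i j = 0.
    by move=> i; exact: (proj2_sig (constructive_indefinite_description _ (Hg i))).
  pose l : H1V p1 p2 q -> A := fun v => match v with
   | inl (inl (inl (inl a))) => if a == c0 then mu else if a == c1 then mu - c else c
   | inl (inl (inl (inr j))) => f1 j
   | inl (inl (inr _)) => mu
   | inl (inr _) => mu
   | inr (existT i j) => g i j end.
  have ic0 : c != 0 by case/andP: ic.
  have icc : c + c = 0 by case/andP: ic => _ /eqP.
  exists l; split.
    case => [[[[a|j]|j]|i]|[i j]] /=.
    + case: ifP => _; first exact: m0; case: ifP => _; last exact: ic0. by rewrite subr_eq0.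
    + exact: f1nz.
    + exact: m0.
    + exact: m0.
    + by case: (gP i) => + _; apply.
  exists mu => v; change (N +%R v l = mu).
  case: v => [[[[a|j]|j]|i]|[i j]].
  + case: a => [[|[|[|[|a]]]] Ha] //.
    * have -> : Ordinal Ha = c0 by apply: val_inj.
      rewrite N_v1 /= f1s sum_const_ord.
      by rewrite subrK subrK.
    * have -> : Ordinal Ha = c1 by apply: val_inj.
      by rewrite N_v2 big_empty //= addr0 icc addr0.
    * have -> : Ordinal Ha = c2 by apply: val_inj.
      by rewrite N_v3 /= subrK.
    * have -> : Ordinal Ha = c3 by apply: val_inj.
      by rewrite N_v4 /= subrK.
  + by rewrite N_pv1.
  + by have := ltn_ord j; rewrite {2}Hp2.
  + by rewrite N_uv /=; case: (gP i) => _ ->; rewrite addr0.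
  + by rewrite N_wv.
Qed.
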